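(* Suppose $\mathcal Y$ is finite-dimensional of dimension $d\in\mathbb N$. There exists a constant $c>0$ (depending only on $(\mathcal Y,\|\cdot\|_{\mathcal Y})$, not on the functional) such that the following holds: for every linear functional $H:\underline{\mathcal Z}\to\mathcal Y$ with a formal convolution representation $\underline\kappa$ and every $\underline z\in\underline{\mathcal Z}$, there exist disjoint subsets $J_1,\dots,J_{2^d}\subseteq\mathbb Z_-$ with $$\sum_{t\le0}\|\kappa_t(z_t)\|_{\mathcal Y}\le c\sum_{i=1}^{2^d}\Big\|H\Big(\sum_{t\in J_i}\delta^t(z_t)\Big)\Big\|_{\mathcal Y}<\infty.$$ In particular, the convolution representation of $H$ is proper.
   Context: Let $(\mathcal Z,\|\cdot\|)$ and $(\mathcal Y,\|\cdot\|_{\mathcal Y})$ be normed vector spaces over $\mathbb R$ and $\mathcal B=\{z\in\mathcal Z:\|z\|\le1\}$. Let $\mathbb Z_-=\{0,-1,-2,\dots\}$; elements of $\mathcal Z^{\mathbb Z_-}$ are sequences $\underline z=(z_t)_{t\le0}$. For $t\in\mathbb Z_-$, $\delta^t:\mathcal Z\to\mathcal Z^{\mathbb Z_-}$ maps $z$ to the sequence whose entry at time $t$ is $z$ and all other entries are $0$. Standing assumption: $\underline{\mathcal Z}\subseteq\mathcal Z^{\mathbb Z_-}$ is a set such that (a) $\underline{\mathcal Z}$ is convex and $\underline{\mathcal Z}=\{-\underline z:\underline z\in\underline{\mathcal Z}\}$; (b) $\delta^t(\mathcal B)\subseteq\underline{\mathcal Z}$ for all $t\in\mathbb Z_-$; (c)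 for every $\underline z\in\underline{\mathcal Z}$ and every $J\subseteq\mathbb Z_-$, the sequence $\sum_{t\in J}\delta^t(z_t)$ (equal to $z_t$ at times $t\in J$ and $0$ elsewhere) belongs to $\underline{\mathcal Z}$. A functional $H:\underline{\mathcal Z}\to\mathcal Y$ is linear if it is the restriction of a linear map defined on the linear span of $\underline{\mathcal Z}$. $L(\mathcal Z,\mathcal Y)$ is the space of continuous linear maps $\mathcal Z\to\mathcal Y$. $H$ has a formal convolution representation $\underline\kappa\in L(\mathcal Z,\mathcal Y)^{\mathbb Z_-}$ if $H(\underline z)=\lim_{T\to-\infty}\sum_{t=T}^0\kappa_t(z_t)$ for all $\underline z\in\underline{\mathcal Z}$; the representation is proper if moreover $\sum_{t\le0}\|\kappa_t(z_t)\|_{\mathcal Y}<\infty$ for all $\underline z\in\underline{\mathcal Z}$. *)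

(* Defs.v *)
From HB Require Import structures.
From mathcomp Require Import all_boot all_order all_algebra.
From mathcomp Require Import all_classical all_reals all_analysis.
Set Implicit Arguments. Unset Strict Implicit. Unset Printing Implicit Defensive.
Import Order.TTheory GRing.Theory Num.Theory.
Import numFieldNormedType.Exports.
Local Open Scope classical_set_scope.
Local Open Scope ring_scope.

(* Time convention: index n : nat stands for time t = -n in Z_- = {0,-1,-2,...}.
   A sequence (z_t)_{t <= 0} is thus a function nat -> Z, with z n = z_{-n}.
   Subsets J of Z_- are likewise represented as sets of nat. *)

Section Defs.
Variable R : realType.

Definition findim (Y : lmodType R) (d : nat) : Prop :=
  exists f : Y -> 'rV[R]_d, linear f /\ bijective f.

Variable Z : normedModType R.

Definition delta (t : nat) (z : Z) : nat -> Z :=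
  fun n => if n == t then z else 0.

(* sum_{t in J} delta^t(z_t) *)
Definition restr_seq (J : set nat) (z : nat -> Z) : nat -> Z :=
  fun n => if n \in J then z n else 0.

Definition standing_assumption (Zs : set (nat -> Z)) : Prop :=
  [/\ (forall x y (l : R), Zs x -> Zs y -> 0 <= l -> l <= 1 ->
         Zs (fun n => l *: x n + (1 - l) *: y n)),
      (forall x, Zs x -> Zs (fun n => - x n)),
      (forall t (z : Z), `|z| <= 1 -> Zs (delta t z)) &
      (forall z (J : set nat), Zs z -> Zs (restr_seq J z))].

Inductive in_span (S : set (nat -> Z)) : (nat -> Z) -> Prop :=
| span_zero : in_span S (fun _ => 0)
| span_mem x : S x -> in_span S x
| span_comb (a b : R) x y : in_span S x -> in_span S y ->
    in_span S (fun n => a *: x n + b *: y n).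

Variable Y : normedModType R.

Definition linear_functional (Zs : set (nat -> Z)) (H : (nat -> Z) -> Y) : Prop :=
  exists L : (nat -> Z) -> Y,
    (forall (a b : R) x y, in_span Zs x -> in_span Zs y ->
       L (fun n => a *: x n + b *: y n) = a *: L x + b *: L y) /\
    (forall z, Zs z -> H z = L z).

Definition formal_conv (Zs : set (nat -> Z)) (H : (nat -> Z) -> Y)
    (kappa : nat -> {linear Z -> Y}) : Prop :=
  (forall t, continuous (kappa t)) /\
  (forall z, Zs z ->
     (fun N : nat => \sum_(0 <= n < N.+1) kappa n (z n)) @ \oo --> H z).

Definition proper_conv (Zs : set (nat -> Z)) (kappa : nat -> {linear Z -> Y}) : Prop :=
  forall z, Zs z -> (\sum_(0 <= n <oo) (`|kappa n (z n)|)%:E < +oo)%E.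

End Defs.

(* Main.v *)
Require Import Defs.
From HB Require Import structures.
From mathcomp Require Import all_boot all_order all_algebra.
From mathcomp Require Import all_classical all_reals all_analysis.
Import Order.TTheory GRing.Theory Num.Theory.
Import numFieldNormedType.Exports.
Local Open Scope classical_set_scope.
Local Open Scope ring_scope.
Lemma coord_le (R : realType) d (x : 'rV[R]_d) j : `|x 0 j| <= `|x|.
Proof.
have /mapP[k Hk ->] : `|x 0 j| \in [seq `|x u.1 u.2| | u : 'I_1 * 'I_d].
  by apply/mapP; exists (0, j) => //=; rewrite mem_enum.
by rewrite [leRHS]/Num.norm /= mx_normrE; apply/bigmax_geP; right => /=; exists k.
Qed.

Lemma lin_bound (R : realType) (Y : normedModType R) d (g : {linear 'rV[R]_d -> Y}) :
  exists2 K, 0 <= K & forall x, `|g x| <= `|x| * K.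
Proof.
exists (\sum_(j < d) `|g (delta_mx 0 j)|); first by apply: sumr_ge0 => *.
move=> x; rewrite {1}(row_sum_delta x) linear_sum /= mulr_sumr.
apply: le_trans (ler_norm_sum _ _ _) _; apply: ler_sum => j _.
by rewrite linearZ /= normrZ ler_wpM2r // coord_le.
Qed.

Lemma lin_cont (R : realType) (Y : normedModType R) d (g : {linear 'rV[R]_d -> Y}) :
  continuous g.
Proof.
apply: bounded_linear_continuous; apply/bounded_funP => r.
have [K K0 HK] := @lin_bound _ _ _ g.
exists (r * K) => x xr; apply: le_trans (HK x) _; exact: ler_wpM2r.
Qed.

Lemma lin_lower (R : realType) (Y : normedModType R) d (g : {linear 'rV[R]_d -> Y}) :
  injective g -> exists2 m, 0 < m & forall x, m * `|x| <= `|g x|.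
Proof.
move=> ginj.
have [[x0 x0n0] | allz] := pselect (exists x : 'rV[R]_d, x != 0); last first.
  exists 1 => // x; have -> : x = 0.
    by apply: contra_notP allz => /eqP ?; exists x.
  by rewrite normr0 mulr0.
pose S := [set x : 'rV[R]_d | `|x| = 1].
have S0 : S !=set0.
  exists (`|x0|^-1 *: x0); rewrite /S /= normrZ normfV normr_id mulVf //.
  by rewrite normr_eq0.
have Sb : bounded_set S.
  rewrite /= /bounded_near; near=> M => x Sx /=; rewrite Sx.
  near: M; apply: nbhs_pinfty_ge; exact: num_real.
have Sc : closed S.
  have -> : S = (fun x : 'rV[R]_d => `|x|) @^-1` [set y | y = 1] by [].
  apply: preimage_closed; last exact: closed_eq.
  by move=> x _; apply: norm_continuous.
have cS : compact S by apply: bounded_closed_compact.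
have cf : {within S, continuous (fun x => `|g x|)}.
  apply: continuous_subspaceT => x.
  apply: continuous_comp; first exact: lin_cont.
  exact: norm_continuous.
have [c cinS cmin] := EVT_min_rV S0 cS cf.
have Sc1 : `|c| = 1 by move: cinS; rewrite inE.
exists `|g c|.
  rewrite normr_gt0; apply/eqP => gc0.
  have c0 : c = 0 by apply: ginj; rewrite gc0 linear0.
  by move: Sc1; rewrite c0 normr0 => /eqP; rewrite eq_sym oner_eq0.
move=> x; have [->|xn0] := eqVneq x 0; first by rewrite normr0 mulr0.
have xp : 0 < `|x| by rewrite normr_gt0.
have := cmin (`|x|^-1 *: x); rewrite inE /S /= normrZ normfV normr_id mulVf ?gt_eqF //.
move=> /(_ erefl); rewrite linearZ /= normrZ normfV normr_id.
by rewrite ler_pdivlMl // mulrC.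
Unshelve. all: by end_near.
Qed.

Lemma lin_bound2 (R : realType) (Y : normedModType R) d (g : {linear 'rV[R]_d -> Y}) :
  exists2 K, 0 <= K & forall x, `|g x| <= (\sum_(j < d) `|x 0 j|) * K.
Proof.
exists (\sum_(j < d) `|g (delta_mx 0 j)|); first by apply: sumr_ge0 => *.
move=> x; rewrite {1}(row_sum_delta x) linear_sum /= mulr_suml.
apply: le_trans (ler_norm_sum _ _ _) _; apply: ler_sum => j _.
rewrite linearZ /= normrZ ler_wpM2l //.
by rewrite (bigD1 j) //= lerDl; apply: sumr_ge0.
Qed.

Lemma same_sign_sum (R : realType) (r : seq nat) (y : nat -> R) :
  (forall n, 0 <= y n) \/ (forall n, y n <= 0) ->
  \sum_(n <- r) `|y n| = `|\sum_(n <- r) y n|.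
Proof.
case=> H.
  rewrite ger0_norm; last by apply: sumr_ge0.
  by apply: eq_bigr => n _; rewrite ger0_norm.
rewrite ler0_norm; last by apply: sumr_le0.
rewrite -sumrN; by apply: eq_bigr => n _; rewrite ler0_norm.
Qed.


Theorem lemma3p9 (R : realType) (Y : normedModType R) (d : nat) :
  findim Y d ->
  exists c : R, 0 < c /\
    forall (Z : normedModType R) (Zs : set (nat -> Z)),
      standing_assumption Zs ->
      forall (H : (nat -> Z) -> Y) (kappa : nat -> {linear Z -> Y}),
        linear_functional Zs H ->
        formal_conv Zs H kappa ->
        (forall z, Zs z ->
           exists J : 'I_(2 ^ d) -> set nat,
             (forall i j, i != j -> J i `&` J j = set0) /\
             (\sum_(0 <= n <oo) (`|kappa n (z n)|)%:E
                <= (c * \sum_(i < 2 ^ d) `|H (restr_seq (J i) z)|)%:E)%E)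
        /\ proper_conv Zs kappa.
Proof.
move=> [f [lf [g fK gK]]].
have lg : linear g.
  by move=> a u v; apply: (can_inj fK); rewrite gK lf !gK.
pose fl : {linear Y -> 'rV[R]_d} := HB.pack f (GRing.isLinear.Build _ _ _ _ _ lf).
pose gl : {linear 'rV[R]_d -> Y} := HB.pack g (GRing.isLinear.Build _ _ _ _ _ lg).
have [m m0 Hm] := @lin_lower _ _ _ gl (can_inj gK).
have [K K0 HK] := @lin_bound2 _ _ _ gl.
have Hf : forall y j, `|f y 0 j| <= m^-1 * `|y|.
  move=> y j; apply: le_trans (@coord_le _ _ (f y) j) _.
  by rewrite ler_pdivlMl // -{2}(fK y); apply: (Hm (f y)).
have Hg : forall y, `|y| <= (\sum_(j < d) `|f y 0 j|) * K.
  by move=> y; rewrite -{1}(fK y); apply: (HK (f y)).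
pose c := (K + 1) * (d.+1)%:R / m.
have cpos : 0 < c by rewrite !mulr_gt0 ?invr_gt0 // ltr_wpDl.
have c0 := ltW cpos.
exists c; split => //.
move=> Z Zs [_ _ _ SAr] H kappa _ [_ Hconv].

suff main : forall z, Zs z -> exists J : 'I_(2 ^ d) -> set nat,
    (forall i j, i != j -> J i `&` J j = set0) /\
    forall N, \sum_(0 <= n < N) `|kappa n (z n)| <= c * \sum_(i < 2 ^ d) `|H (restr_seq (J i) z)|.
  have ser z : Zs z -> exists J : 'I_(2 ^ d) -> set nat,
      (forall i j, i != j -> J i `&` J j = set0) /\
      (\sum_(0 <= n <oo) (`|kappa n (z n)|)%:E
         <= (c * \sum_(i < 2 ^ d) `|H (restr_seq (J i) z)|)%:E)%E.
    move=> Zz; have [J [disj bnd]] := main z Zz; exists J; split => //.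
    apply: lime_le; first by apply: is_cvg_nneseries => *; rewrite lee_fin.
    by near=> N; rewrite sumEFin lee_fin; exact: bnd.
  split; first exact: ser.
  by move=> z /ser [J [_ le]]; exact: le_lt_trans le (ltry _).
move=> z Zz.
pose a n := kappa n (z n).
pose b n := f (a n).
pose T := {ffun 'I_d -> bool}.
pose pat n : T := [ffun j => b n 0 j < 0].
have eqc : #|T| = (2 ^ d)%N by rewrite card_ffun card_bool card_ord.
pose gI (i : 'I_(2 ^ d)) : T := enum_val (cast_ord (esym eqc) i).
pose iOf n : 'I_(2 ^ d) := cast_ord eqc (enum_rank (pat n)).
have gIinj : injective gI.
  by move=> i i' /enum_val_inj /cast_ord_inj.
have gIiOf n : gI (iOf n) = pat n by rewrite /gI /iOf cast_ordK enum_rankK.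
pose J i := [set n | pat n = gI i].
have memJ n i : (n \in J i) = (iOf n == i).
  apply/idP/idP; rewrite in_setE /J /=.
    by rewrite -gIiOf => /gIinj ->.
  by move/eqP <-.
exists J; split.
  move=> i i' ii'; apply/seteqP; split => // n [/= Ji Ji'].
  by move: ii'; rewrite (gIinj _ _ (etrans (esym Ji) Ji')) eqxx.
pose S i M := \sum_(0 <= n < M) (if n \in J i then a n else 0).
have part n (v : R) : \sum_(i < 2 ^ d) (if n \in J i then v else 0) = v.
  rewrite (bigD1 (iOf n)) //= memJ eqxx big1 ?addr0 // => i.
  by rewrite memJ eq_sym => /negbTE ->.
have fin M : \sum_(0 <= n < M) `|a n| <= c * \sum_(i < 2 ^ d) `|S i M|.
  have step1 : \sum_(0 <= n < M) `|a n| <= K * \sum_(j < d) \sum_(0 <= n < M) `|b n 0 j|.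
    apply: le_trans (ler_sum _ (fun n _ => Hg (a n))) _.
    by rewrite -mulr_suml mulrC exchange_big.
  have step2 j : \sum_(0 <= n < M) `|b n 0 j| <= m^-1 * \sum_(i < 2 ^ d) `|S i M|.
    have -> : \sum_(0 <= n < M) `|b n 0 j| = \sum_(i < 2 ^ d) `|f (S i M) 0 j|.
      transitivity (\sum_(0 <= n < M) \sum_(i < 2 ^ d) (if n \in J i then `|b n 0 j| else 0)).
        by apply: eq_bigr => n _; rewrite part.
      rewrite exchange_big; apply: eq_bigr => i _.
      have -> : f (S i M) 0 j = \sum_(0 <= n < M) (if n \in J i then b n 0 j else 0).
        rewrite (_ : f (S i M) = fl (S i M)) // /S linear_sum summxE; apply: eq_bigr => n _.
        by case: ifP => _ //; rewrite (linear0 fl) mxE.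
      rewrite -same_sign_sum; first by apply: eq_bigr => n _; case: ifP; rewrite ?normr0.
      case: (boolP (gI i j)) => gij; [right|left] => n; case: ifP => // nJ;
        move: nJ; rewrite in_setE /J /= => /(congr1 (fun p : T => p j)); rewrite ffunE.
        by rewrite gij => /ltW.
      by rewrite (negbTE gij) leNgt => ->.
    by rewrite mulr_sumr; apply: ler_sum => i _; apply: Hf.
  have X0 : 0 <= \sum_(i < 2 ^ d) `|S i M| by apply: sumr_ge0.
  apply: (le_trans step1).
  apply: le_trans (ler_wpM2l K0 (ler_sum _ (fun j _ => step2 j))) _.
  rewrite sumr_const card_ord -mulr_natr /c.
  set X := \sum_(i < 2 ^ d) `|S i M|.
  have u0 : 0 <= m^-1 * X by rewrite mulr_ge0 // invr_ge0 ltW.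
  rewrite [m^-1 * X * _]mulrC mulrA -[(K + 1) * _ / m * X]mulrA -[(K + 1) * _ * (_ * X)]mulrA.
  rewrite [X in _ <= X]mulrA ler_wpM2r //; apply: ler_pM => //; first by rewrite lerDl.
  by rewrite ler_nat.
move=> N.
have HS i : (fun M => S i M.+1) @ \oo --> H (restr_seq (J i) z).
  have E : (fun M => \sum_(0 <= n < M.+1) kappa n (restr_seq (J i) z n)) = (fun M => S i M.+1).
    apply/funext => M; apply: eq_bigr => n _; rewrite /restr_seq.
    by case: ifP => _ //; rewrite linear0.
  by rewrite -E; apply: Hconv; apply: SAr.
have Hlim : (fun M => c * \sum_(i < 2 ^ d) `|S i M.+1|) @ \oo -->
    c * \sum_(i < 2 ^ d) `|H (restr_seq (J i) z)|.
  apply: cvgMl_tmp; apply: cvg_big => //; first exact: add_continuous.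
  by move=> i _; apply: cvg_norm; exact: HS.
apply: (cvgr_to_ge Hlim); near=> M; apply: le_trans (fin M.+1).
have NM : (N <= M.+1)%N by near: M; exists N => // M /= NM; apply: leqW.
rewrite (big_cat_nat (leq0n N) NM) /= lerDl; apply: sumr_ge0 => *; exact: normr_ge0.
Unshelve. all: by end_near.
Qed.
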